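(* Let $\mathcal F'=(\mathcal A',U,\varphi)$ be a tree weakening of a sequential formalism $\mathcal F=(\mathcal A,U,\varphi)$. If every algebraically closed scenario for $\mathcal F$ is satisfiable, then every algebraically closed scenario for $\mathcal F'$ is satisfiable.
   Context: A finite non-associative algebra is a tuple $(\mathcal A,\cup,\neg,\emptyset,\mathcal B,\diamond,\overline{\cdot},e)$ where $(\mathcal A,\cup,\neg,\emptyset,\mathcal B)$ is a finite Boolean algebra and for all $x,y,z$: $\overline{\overline x}=x$, $\overline{x\cup y}=\overline x\cup\overline y$, $\overline{x\diamond y}=\overline y\diamond\overline x$, $e\diamond x=x\diamond e=x$, $x\diamond(y\cup z)=(x\diamond y)\cup(x\diamond z)$, $(x\diamond y)\cap\overline z=\emptyset\iff(y\diamond z)\cap\overline x=\emptyset$. $r\subseteq r'$ means $r\cup r'=r'$; atoms are basic relations; $\mathsf B_i$ denotes the atoms of $\mathcal A_i$. A projection operator from $\mathcal A$ to $\mathcal A'$ is a map $\Rsh$ with $\Rsh(r\cup r')=\Rsh r\cup\Rsh r'$ and $\Rsh\overline r=\overline{\Rsh r}$. A finite multi-algebra is a product $\mathcal A_1\times\cdots\times\mathcal A_m$ of finite non-associative algebras with projection operators $\Rsh_i^j:\mathcal A_i\to\mathcal A_j$ for distinct $i,j$; operations and $\subseteq$ componentwise; universal $\mathcal B=(\mathcal B_1,\dots,\mathcal B_m)$; $R$ basic if all $R_i$ atoms; $B\in R$ means $B$ basic, $B\subseteq R$; $R$ closed under projection if $R_j\subseteq\Rsh_i^jR_i$ for all distinct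 $i,j$; projection closure $\Rsh R$: repeatedly replace $R_j$ by $R_j\cap\Rsh_i^jR_i$ to a fixed point. A sequential formalism is $(\mathcal A,U,\varphi)$ with $\mathcal A$ a finite multi-algebra, $U\ne\emptyset$, $\varphi:\mathcal A\to 2^{U\times U}$ satisfying $\varphi(\Rsh R)=\varphi(R)$, $\varphi(\overline R)=\varphi(R)^{-1}$, $\varphi((\emptyset,\dots,\emptyset))=\emptyset$, $\varphi(R\diamond R')\supseteq(\varphi(R)\circ\varphi(R'))\cap\varphi(\mathcal B)$, $\varphi(R\cap R')=\varphi(R)\cap\varphi(R')$, $\varphi(R)=\bigcup_{B\in R}\varphi(B)$. A network is a finite set $E$ of variables with $N^{xy}$ for distinct $x,y$, $N^{yx}=\overline{N^{xy}}$; a scenario if all $N^{xy}$ basic; satisfiable if some $(u_x)\subseteq U$ has $(u_x,u_y)\in\varphi(N^{xy})$ for all distinct $x,y$; algebraically closed (for a multi-algebra) if $N^{xz}\subseteq N^{xy}\diamond N^{yz}$ for all distinct $x,y,z$ and every $N^{xy}$ is closed under projection (for that multi-algebra's projections). Inverse projection $\check\Rsh_i^j:\mathcal A_j\to\mathcal A_i$: for $b\in\mathsf B_i$, $b'\in\mathsf B_j$, $b\subseteq\check\Rsh_i^jb'\iff b'\subseteq\Rsh_i^jb$. An anti-tree structure on $V$ is a directed graph with a root $r$ such that every $v\ne r$ has exactly one directed path to $r$. A plenary anti-tree structure of $\mathcal A$ is an anti-tree structure $\mathtt A$ on $\{1,\dots,m\}$ such that for all distinct $i,j$, with $i=k_0\to\cdots\to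 k_s\leftarrow\cdots\leftarrow k_{s+t+1}=j$ the shortest oriented chain between them, every $b\in\mathsf B_i$ satisfies $\Rsh_i^jb\supseteq\check\Rsh_j^{k_{s+t}}\cdots\check\Rsh_{k_{s+1}}^{k_s}\Rsh_{k_{s-1}}^{k_s}\cdots\Rsh_i^{k_1}b$; $\mathcal A$ is a tree multi-algebra if it has one. $\mathcal A'$ is a weakening of $\mathcal A$ if it has the same algebras and operations and $\Rsh_i^jb\subseteq\Rsh_i'^jb$ for all distinct $i,j$ and atoms $b$ of $\mathcal A_i$; a tree weakening of a tree multi-algebra $\mathcal A$ if moreover, for some plenary anti-tree structure $\mathtt A$ of $\mathcal A$, $\Rsh_i^jb=\Rsh_i'^jb$ whenever $i\to j$ is an edge of $\mathtt A$. $(\mathcal A',U,\varphi)$ is then a (tree) weakening of $(\mathcal A,U,\varphi)$. *)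

(* Defs.v *)
From mathcomp Require Import all_boot.
Set Implicit Arguments. Unset Strict Implicit. Unset Printing Implicit Defensive.

(* A finite Boolean algebra is represented (up to isomorphism) as the powerset
   {set T} of its finite set of atoms T; the atoms (basic relations) are the
   singletons [set b], b : T. *)
Record nalg (T : finType) := NAlg {
  ncomp : {set T} -> {set T} -> {set T};
  nconv : {set T} -> {set T};
  nid : {set T} }.

Definition is_nalg (T : finType) (A : nalg T) : Prop :=
  (forall x, nconv A (nconv A x) = x) /\
  (forall x y, nconv A (x :|: y) = nconv A x :|: nconv A y) /\
  (forall x y, nconv A (ncomp A x y) = ncomp A (nconv A y) (nconv A x)) /\
  (forall x, ncomp A (nid A) x = x /\ ncomp A x (nid A) = x) /\
  (forall x y z, ncomp A x (y :|: z) = ncomp A x y :|: ncomp A x z) /\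
  (forall x y z, (ncomp A x y :&: nconv A z == set0)
                 = (ncomp A y z :&: nconv A x == set0)).

Section Multi.
Variable m : nat.
Variable At : 'I_m -> finType.

Definition mrel := forall i : 'I_m, {set At i}.
Definition projs := forall i j : 'I_m, {set At i} -> {set At j}.

Definition is_projection (i j : 'I_m) (p : {set At i} -> {set At j})
  (Ai : nalg (At i)) (Aj : nalg (At j)) : Prop :=
  (forall r r', p (r :|: r') = p r :|: p r') /\
  (forall r, p (nconv Ai r) = nconv Aj (p r)).

Definition is_multi_alg (alg : forall i, nalg (At i)) (P : projs) : Prop :=
  (forall i, is_nalg (alg i)) /\
  (forall i j, i != j -> is_projection (P i j) (alg i) (alg j)).

Variable alg : forall i, nalg (At i).

Definition mconv (R : mrel) : mrel := fun i => nconv (alg i) (R i).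
Definition mcomp (R R' : mrel) : mrel := fun i => ncomp (alg i) (R i) (R' i).
Definition mcap (R R' : mrel) : mrel := fun i => R i :&: R' i.
Definition mempty : mrel := fun i => set0.
Definition mfull : mrel := fun i => setT.
Definition msub (R R' : mrel) : Prop := forall i, R i \subset R' i.
Definition mbasic (R : mrel) : Prop := forall i, #|R i| = 1.

Definition closed_proj (P : projs) (R : mrel) : Prop :=
  forall i j, i != j -> R j \subset P i j (R i).

Definition pstep (P : projs) (R : mrel) : mrel :=
  fun j => R j :&: \bigcap_(i | i != j) P i j (R i).
(* iterating until a fixed point is reached: since every non-stationary
   round removes at least one atom, sum_i |B_i| rounds suffice *)
Definition pclos (P : projs) (R : mrel) : mrel :=
  iter (\sum_(i < m) #|At i|) (pstep P) R.

Definition seq_formalism (P : projs) (U : Type) (phi : mrel -> U -> U -> Prop) : Prop :=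
  is_multi_alg alg P /\
  inhabited U /\
  (forall R u v, phi (pclos P R) u v <-> phi R u v) /\
  (forall R u v, phi (mconv R) u v <-> phi R v u) /\
  (forall u v, ~ phi mempty u v) /\
  (forall R R' u w v, phi R u w -> phi R' w v -> phi mfull u v ->
                      phi (mcomp R R') u v) /\
  (forall R R' u v, phi (mcap R R') u v <-> phi R u v /\ phi R' u v) /\
  (forall R u v, phi R u v <-> exists B, [/\ mbasic B, msub B R & phi B u v]).

Definition network (E : finType) (N : E -> E -> mrel) : Prop :=
  forall x y, x != y -> forall i, N y x i = mconv (N x y) i.

Definition scenario (E : finType) (N : E -> E -> mrel) : Prop :=
  forall x y, x != y -> mbasic (N x y).

Definition satisfiable (U : Type) (phi : mrel -> U -> U -> Prop)
  (E : finType) (N : E -> E -> mrel) : Prop :=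
  exists u : E -> U, forall x y, x != y -> phi (N x y) (u x) (u y).

Definition alg_closed (P : projs) (E : finType) (N : E -> E -> mrel) : Prop :=
  (forall x y z, x != y -> y != z -> x != z -> msub (N x z) (mcomp (N x y) (N y z)))
  /\ (forall x y, x != y -> closed_proj P (N x y)).

(* inverse projection  check-Rsh_i^j : A_j -> A_i, determined on atoms by
   b <= check-Rsh_i^j b'  <->  b' <= Rsh_i^j b, and extended additively *)
Definition invproj (P : projs) (i j : 'I_m) (S : {set At j}) : {set At i} :=
  [set b : At i | [exists b' : At j, (b' \in S) && (b' \in P i j [set b])]].

(* anti-tree structure on 'I_m: root r, every v <> r has a unique outgoing
   edge v -> par v, and iterating par from any vertex reaches r *)
Definition antitree (par : 'I_m -> 'I_m) (r : 'I_m) : Prop :=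
  par r = r /\ forall v, iter m par v = r.

(* the directed path v = v_0 -> v_1 -> ... -> r *)
Definition up (par : 'I_m -> 'I_m) (r : 'I_m) (v : 'I_m) : seq 'I_m :=
  take (index r (traject par v m)).+1 (traject par v m).

(* shortest oriented chain i = k_0 -> ... -> k_s <- ... <- k_{s+t+1} = j *)
Definition lca par r (i j : 'I_m) : 'I_m :=
  nth r (up par r i) (find (fun k => k \in up par r j) (up par r i)).
(* [k_1; ...; k_s] *)
Definition upseg par r (i j : 'I_m) : seq 'I_m :=
  behead (take (find (fun k => k \in up par r j) (up par r i)).+1 (up par r i)).
(* [k_{s+1}; ...; k_{s+t+1}] *)
Definition downseg par r (i j : 'I_m) : seq 'I_m :=
  behead (rev (take (index (lca par r i j) (up par r j)).+1 (up par r j))).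

Definition dset := {k : 'I_m & {set At k}}.
Definition fwd (P : projs) (x : dset) (k' : 'I_m) : dset :=
  existT _ k' (P (projT1 x) k' (projT2 x)).
Definition bwd (P : projs) (x : dset) (k' : 'I_m) : dset :=
  existT _ k' (@invproj P k' (projT1 x) (projT2 x)).
Definition dget (j : 'I_m) (x : dset) : {set At j} :=
  let (k, S) := x in
  match k =P j with
  | ReflectT e => eq_rect k (fun k => {set At k}) S j e
  | ReflectF _ => set0
  end.

(* check-Rsh_j^{k_{s+t}} ... check-Rsh_{k_{s+1}}^{k_s} Rsh_{k_{s-1}}^{k_s} ... Rsh_i^{k_1} S *)
Definition chain_apply (P : projs) par r (i j : 'I_m) (S : {set At i}) : {set At j} :=
  dget j (foldl (bwd P) (foldl (fwd P) (existT _ i S) (upseg par r i j))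
                 (downseg par r i j)).

Definition plenary (P : projs) par r : Prop :=
  antitree par r /\
  forall i j : 'I_m, i != j -> forall b : At i,
    chain_apply P par r j [set b] \subset P i j [set b].

Definition tree_weakening (P P' : projs) : Prop :=
  [/\ is_multi_alg alg P',
      forall i j, i != j -> forall b : At i, P i j [set b] \subset P' i j [set b] &
      exists par r, plenary P par r /\
        forall i, i != r -> forall b : At i, P i (par i) [set b] = P' i (par i) [set b]].

End Multi.

(* Main.v *)
Require Import Defs.
From mathcomp Require Import all_boot.
Set Implicit Arguments. Unset Strict Implicit.

Lemma last_take (T : Type) (x : T) s n : n <= size s -> last x (take n s) = nth x (x :: s) n.
Proof.
elim: s x n => [|y s IH] x [|n] //= Hn.
by rewrite IH // (set_nth_default x) //= ltnS.
Qed.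

Lemma mem_take_index (T : eqType) (r : T) s : r \in s -> r \in take (index r s).+1 s.
Proof.
elim: s => [|x s IH] //=; rewrite inE.
have [->|nx] /= := eqVneq x r; first by rewrite inE eqxx.
by move=> /IH H; rewrite inE H orbT.
Qed.

Definition prel m (par : 'I_m -> 'I_m) r (a b : 'I_m) := (a != r) && (b == par a).

Lemma path_take_index m (par : 'I_m -> 'I_m) r x s :
  fpath par x s -> path (prel par r) x (take (index r (x :: s)) s).
Proof.
elim: s x => [|y s IH] x //=.
have [->|nx] /= := eqVneq x r; first by [].
case/andP=> /eqP fx ps /=.
rewrite /prel nx -fx eqxx /=.
rewrite -fx in ps; exact: (IH _ ps).
Qed.

Lemma r_in_traj m (par : 'I_m -> 'I_m) r v : iter m par v = r -> r \in traject par v m.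
Proof.
move=> <-.
have: ~~ uniq (traject par v m.+1).
  apply/negP=> /card_uniqP; rewrite size_traject => H.
  have := max_card (mem (traject par v m.+1)); rewrite H card_ord ltnn //.
by rewrite looping_uniq negbK => /loopingP.
Qed.

Definition good m (At : 'I_m -> finType) (R : mrel At) (x : dset At) :=
  R (projT1 x) \subset projT2 x.

Lemma fold_fwd m (At : 'I_m -> finType) (P : projs At) (R : mrel At) (par : 'I_m -> 'I_m) r :
  (forall k, k != r -> forall S : {set At k}, R k \subset S -> R (par k) \subset P k (par k) S) ->
  forall s x, path (prel par r) (projT1 x) s -> good R x ->
    good R (foldl (fwd P) x s) /\ projT1 (foldl (fwd P) x s) = last (projT1 x) s.
Proof.
move=> Hf; elim=> [|y s IH] [k S] //= /andP[/andP[nk /eqP ->] ps] g.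
apply: IH => //; exact: Hf.
Qed.

Lemma fold_bwd m (At : 'I_m -> finType) (P : projs At) (R : mrel At) (par : 'I_m -> 'I_m) r :
  (forall k, k != r -> forall S : {set At (par k)}, R (par k) \subset S -> R k \subset invproj P k S) ->
  forall s x, path (fun a b => prel par r b a) (projT1 x) s -> good R x ->
    good R (foldl (bwd P) x s) /\ projT1 (foldl (bwd P) x s) = last (projT1 x) s.
Proof.
move=> Hb; elim=> [|y s IH] [k S] //= /andP[/andP[ny /eqP ek] ps] g.
subst k; apply: IH => //; exact: Hb.
Qed.

Lemma dget_good m (At : 'I_m -> finType) (R : mrel At) j x :
  good R x -> projT1 x = j -> R j \subset dget j x.
Proof.
case: x => k S /= g ek; subst k; rewrite /dget.
case: eqP => // e; by rewrite (eq_axiomK e).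
Qed.

Lemma up_struct m (par : 'I_m -> 'I_m) r v :
  antitree par r ->
  [/\ up par r v = v :: behead (up par r v),
      path (prel par r) v (behead (up par r v)) & r \in up par r v].
Proof.
case=> _ Hit.
have Hr := r_in_traj (Hit v).
rewrite /up; move: Hr; case: m par r v Hit => [|m'] par r v Hit; first by case: v.
rewrite /= => Hr; split => //.
  exact: path_take_index (fpath_traject _ _ _).
by move: (mem_take_index Hr).
Qed.

Lemma chain_good m (At : 'I_m -> finType) (P : projs At) (R : mrel At) (par : 'I_m -> 'I_m) r :
  antitree par r ->
  (forall k, k != r -> forall S : {set At k}, R k \subset S -> R (par k) \subset P k (par k) S) ->
  (forall k, k != r -> forall S : {set At (par k)}, R (par k) \subset S -> R k \subset invproj P k S) ->
  forall i j (S : {set At i}), R i \subset S -> R j \subset chain_apply P par r j S.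
Proof.
move=> Hat Hf Hb i j S HS.
have [ei pi ri] := up_struct i Hat; have [ej pj rj] := up_struct j Hat.
rewrite /chain_apply /upseg /downseg /lca.
move: ei pi ri ej pj rj.
set ui := up par r i; set uj := up par r j => ei pi ri ej pj rj.
set f := find _ ui.
have hf : has (fun k => k \in uj) ui by apply/hasP; exists r.
have fl : f < size ui by rewrite -has_find.
have lin : nth r ui f \in uj := nth_find r hf.
set l := nth r ui f in lin *.
have eu : behead (take f.+1 ui) = take f (behead ui) by rewrite {1}ei.
have pu : path (prel par r) i (take f (behead ui)).
  have H := pi; rewrite -(cat_take_drop f (behead ui)) cat_path in H; by case/andP: H.
have lu : last i (take f (behead ui)) = l.
  rewrite last_take -?ei; first by rewrite (set_nth_default r).
  by move: fl; rewrite {1}ei.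
have [g1 e1] := fold_fwd Hf pu (x := existT _ i S) HS.
rewrite eu.
set x1 := foldl _ _ _ in g1 e1 *.
set idx := index l uj.
have il : idx < size uj by rewrite index_mem.
set p := take idx (behead uj).
have et : take idx.+1 uj = j :: p by rewrite {1}ej.
have lp : last j p = l.
  rewrite /p last_take -?ej; first by rewrite (set_nth_default r) // nth_index.
  by move: il; rewrite {1}ej.
have ed : behead (rev (take idx.+1 uj)) = rev (belast j p) by rewrite et lastI rev_rcons.
have pp : path (prel par r) j p.
  have H := pj; rewrite -(cat_take_drop idx (behead uj)) cat_path in H; by case/andP: H.
have pd : path (fun a b => prel par r b a) l (rev (belast j p)) by rewrite -lp rev_path.
have ld : last l (rev (belast j p)) = j.
  case: p lp {et ed pp pd} => [|y p'] /=; first by move=> <-.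
  by rewrite rev_cons last_rcons.
rewrite ed; rewrite lu in e1; rewrite -e1 in pd ld.
have [g2 e2] := fold_bwd Hb pd g1.
apply: dget_good g2 _; by rewrite e2.
Qed.

Theorem proposition6p30 (m : nat) (At : 'I_m -> finType)
  (alg : forall i, nalg (At i)) (P P' : projs At)
  (U : Type) (phi : mrel At -> U -> U -> Prop) :
  seq_formalism alg P phi ->
  tree_weakening alg P P' ->
  (forall (E : finType) (N : E -> E -> mrel At),
      network alg N -> scenario N -> alg_closed alg P N -> satisfiable phi N) ->
  forall (E : finType) (N : E -> E -> mrel At),
    network alg N -> scenario N -> alg_closed alg P' N -> satisfiable phi N.
Proof.
move=> [[_ Hproj] _] [_ _ [par [r [[Hat Hpl] Hedge]]]] Hsat E N Hnet Hsc [Hcomp Hcl].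
apply: Hsat => //; split => // x y nxy.
set R := N x y.
have Hb1 : forall k, exists b, R k = [set b].
  by move=> k; apply/cards1P; apply/eqP; exact: Hsc.
have npar : forall k, k != r -> par k != k.
  move=> k nk; apply/eqP => pk; move/eqP: nk; apply.
  have itf : forall n, iter n par k = k by elim=> //= n ->.
  by rewrite -(Hat.2 k) itf.
have Hedge' : forall k, k != r -> R (par k) \subset P k (par k) (R k).
  move=> k nk; have [b eb] := Hb1 k.
  have := Hcl x y nxy k (par k); rewrite eq_sym npar // => /(_ isT).
  by rewrite -/R eb (Hedge k nk b).
have Hf : forall k, k != r -> forall S : {set At k}, R k \subset S -> R (par k) \subset P k (par k) S.
  move=> k nk S HS; apply: subset_trans (Hedge' k nk) _.
  have nk2 : k != par k by rewrite eq_sym npar.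
  have [Hadd _] := Hproj k (par k) nk2.
  by rewrite -(setUidPr HS) Hadd subsetUl.
have Hb : forall k, k != r -> forall S : {set At (par k)}, R (par k) \subset S -> R k \subset invproj P k S.
  move=> k nk S HS; have [b eb] := Hb1 k; have [b' eb'] := Hb1 (par k).
  apply/subsetP => z; rewrite eb in_set1 => /eqP ->; rewrite inE; apply/existsP; exists b'.
  have := Hedge' k nk; rewrite eb eb' sub1set => ->; rewrite andbT.
  by move: HS; rewrite eb' sub1set.
move=> i j nij; have [b eb] := Hb1 i; rewrite eb.
apply: subset_trans (Hpl i j nij b).
by apply: chain_good Hat Hf Hb _ _ _ _; rewrite eb.
Qed.
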